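(* Let $C=\{c_1,\dots,c_m\}\subset\Delta_d$ be a finite nonempty set and let $v\in\Delta_d$ with $v\in\mathrm{Cone}(C)$. Then $\max_{c\in C}v^\top c\ge\frac1d$.
   Context: $\Delta_d=\{x\in\mathbb{R}^d_{\ge 0}:\sum_i x^i=1\}$; $\mathrm{Cone}(C)$ is the set of nonnegative linear combinations of elements of $C$. *)

(* Defs.v *)
From mathcomp Require Import all_boot all_order all_algebra.
Set Implicit Arguments. Unset Strict Implicit. Unset Printing Implicit Defensive.
Import Order.TTheory GRing.Theory Num.Theory.
Local Open Scope ring_scope.

Definition simplex (R : realFieldType) (d : nat) (x : 'rV[R]_d) : Prop :=
  (forall i : 'I_d, 0 <= x 0 i) /\ \sum_(i < d) x 0 i = 1.

Definition dotv (R : realFieldType) (d : nat) (x y : 'rV[R]_d) : R :=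
  \sum_(i < d) x 0 i * y 0 i.

Definition in_cone (R : realFieldType) (d : nat) (C : seq 'rV[R]_d) (v : 'rV[R]_d) : Prop :=
  exists lam : 'rV[R]_d -> R,
    (forall c, c \in C -> 0 <= lam c) /\ v = \sum_(c <- undup C) lam c *: c.

(* Main.v *)
Require Import Defs.
From mathcomp Require Import all_boot all_order all_algebra.
From mathcomp Require Import ring lra.
Import Order.TTheory GRing.Theory Num.Theory.
Local Open Scope ring_scope.

Lemma seq_argmax (R : realFieldType) (T : eqType) (s : seq T) (f : T -> R) :
  s != [::] -> exists2 c, c \in s & forall c', c' \in s -> f c' <= f c.
Proof.
elim: s => [//|a s IH] _.
case: s IH => [|b s] IH.
  by exists a; rewrite ?inE // => c'; rewrite inE => /eqP ->.
have [c cin cmax] := IH isT.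
case: (leP (f a) (f c)) => h.
  exists c; first by rewrite inE cin orbT.
  by move=> c'; rewrite inE => /orP [/eqP -> //|]; apply: cmax.
exists a; first by rewrite inE eqxx.
move=> c'; rewrite inE => /orP [/eqP -> //|/cmax h2].
exact: (le_trans h2 (ltW h)).
Qed.

Lemma sq_bound (R : realFieldType) (d : nat) (v : 'rV[R]_d) :
  simplex v -> 1 / d%:R <= dotv v v.
Proof.
move=> [v0 v1].
have dpos : 0 < d%:R :> R.
  case: d v v0 v1 => [|d] v v0 v1; last by rewrite ltr0n.
  by move: v1; rewrite big_ord0 => /eqP; rewrite eq_sym oner_eq0.
set a := 1 / d%:R.
have H : 0 <= \sum_(i < d) (v 0 i - a) ^+ 2.
  by apply: sumr_ge0 => i _; apply: sqr_ge0.
have E : \sum_(i < d) (v 0 i - a) ^+ 2 =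
   dotv v v - 2 * a * \sum_(i < d) v 0 i + d%:R * a ^+ 2.
  rewrite /dotv.
  under eq_bigr => i _ do rewrite sqrrB.
  rewrite big_split /= sumrB.
  have -> : \sum_(i < d) a ^+ 2 = d%:R * a ^+ 2.
    by rewrite sumr_const card_ord mulr_natl.
  have -> : \sum_(i < d) v 0 i ^+ 2 = \sum_(i < d) v 0 i * v 0 i.
    by apply: eq_bigr => i _; rewrite expr2.
  have -> : \sum_(i < d) v 0 i * a *+ 2 = 2 * a * \sum_(i < d) v 0 i.
    by rewrite mulr_sumr; apply: eq_bigr => i _; rewrite mulr2n; ring.
  by [].
move: H; rewrite E v1 => H.
have ha : d%:R * a ^+ 2 = a.
  rewrite /a; field; exact: lt0r_neq0.
rewrite ha in H; lra.
Qed.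

Theorem lemma1 (R : realFieldType) (d : nat) (C : seq 'rV[R]_d) (v : 'rV[R]_d) :
  C != [::] ->
  (forall c, c \in C -> simplex c) ->
  simplex v ->
  in_cone C v ->
  exists2 c, c \in C & dotv v c >= 1 / d%:R.
Proof.
move=> CN Cs vs [lam [lam0 vE]].
have [c cin cmax] := @seq_argmax _ _ C (dotv v) CN.
exists c => //.
have vi : forall i, v 0 i = \sum_(c <- undup C) lam c * c 0 i.
  by move=> i; rewrite vE summxE; apply: eq_bigr => x _; rewrite mxE.
have D : dotv v v = \sum_(c <- undup C) lam c * dotv v c.
  rewrite /dotv.
  under eq_bigr => i _ do rewrite {2}vi mulr_sumr.
  rewrite exchange_big /=; apply: eq_bigr => x _.
  by rewrite mulr_sumr; apply: eq_bigr => i _; ring.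
have S : \sum_(c <- undup C) lam c = 1.
  case: vs => _ <-.
  under [RHS]eq_bigr => i _ do rewrite vi.
  rewrite exchange_big /= big_seq [RHS]big_seq; apply: eq_bigr => x xin.
  rewrite -mulr_sumr.
  have [_ ->] : simplex x by apply: Cs; rewrite -mem_undup.
  by rewrite mulr1.
apply: (le_trans (@sq_bound _ _ v vs)) _.
rewrite D -[X in _ <= X]mul1r -S mulr_suml.
rewrite big_seq_cond [X in _ <= X]big_seq_cond.
apply: ler_sum => x /andP [xin _].
rewrite mem_undup in xin.
by apply: ler_wpM2l; [apply: lam0 | apply: cmax].
Qed.
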